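(* Let $T$ be a countable tree with root $o$, and let $Q$ be a stochastic matrix on $T$ with $q(x,y)>0$ iff $x=y^-$. Let $\lambda\in\mathbb{C}\setminus\{0\}$ and let $f$ be a $\lambda$-polyharmonic function of order $n\ge1$ for $Q$. Then $$f(x)=\sum_{k=0}^{n-1}|x|^k\,h_k(x),\qquad x\in T,$$ where $h_0,\dots,h_{n-1}$ are $\lambda$-harmonic functions for $Q$, uniquely determined by $f$.
   Context: $|x|=d(o,x)$. $x^-$ is the neighbour of $x\ne o$ closer to $o$. $Qf(x)=\sum_{y:\,y^-=x}q(x,y)f(y)$, required to converge absolutely. $h$ is $\lambda$-harmonic for $Q$ if $Qh=\lambda h$. $f$ is $\lambda$-polyharmonic of order $n$ for $Q$ if $(\lambda I-Q)^nf=0$, where all successive applications of $Q$ are well defined. *)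

(* Defs.v *)
From Stdlib Require Import Reals ClassicalEpsilon.
From Coquelicot Require Import Coquelicot.
From mathcomp Require Import ssreflect ssrfun ssrbool eqtype ssrnat seq choice.

Set Implicit Arguments.
Unset Strict Implicit.

Section Tree.
Variables (T : countType) (o : T) (parent : T -> T).

(* A rooted tree on T: every vertex x <> o has parent x (= x^-), and
   iterating the parent map from any vertex reaches the root o. *)
Definition rooted_tree : Prop := forall x : T, exists k : nat, iter k parent x = o.

Definition is_child (x y : T) : bool := (y != o) && (parent y == x).

Definition is_depth (x : T) (k : nat) : Prop :=
  iter k parent x = o /\ (forall j, (j < k)%N -> iter j parent x <> o).

Definition depth (x : T) : nat := epsilon (inhabits 0%nat) (is_depth x).

Variable q : T -> T -> R.

(* terms of the series  sum_{y : y^- = x} q(x,y) g(y), along the enumeration of T *)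
Definition Qterm (g : T -> C) (x : T) (n : nat) : C :=
  match @pickle_inv T n with
  | Some y => if is_child x y then Cmult (RtoC (q x y)) (g y) else RtoC 0
  | None => RtoC 0
  end.

Definition Qdef (g : T -> C) : Prop :=
  forall x, ex_series (fun n => Cmod (Qterm g x n)).

Definition Qop (g : T -> C) (x : T) : C :=
  (Series (fun n => fst (Qterm g x n)), Series (fun n => snd (Qterm g x n))).

Definition rowterm (x : T) (n : nat) : R :=
  match @pickle_inv T n with Some y => q x y | None => 0%R end.

Definition stochastic_forward : Prop :=
  (forall x y, (0 <= q x y)%R) /\
  (forall x y, (0 < q x y)%R <-> is_child x y) /\
  (forall x, is_series (rowterm x) 1%R).

Variable lam : C.

Definition harmonic (h : T -> C) : Prop :=
  Qdef h /\ forall x, Qop h x = Cmult lam (h x).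

Fixpoint Liter (k : nat) (f : T -> C) : T -> C :=
  match k with
  | O => f
  | S k' => fun x => Cminus (Cmult lam (Liter k' f x)) (Qop (Liter k' f) x)
  end.

Definition polyharmonic (n : nat) (f : T -> C) : Prop :=
  (forall k, (k < n)%N -> Qdef (Liter k f)) /\ (forall x, Liter n f x = RtoC 0).

Definition poly_expansion (n : nat) (h : nat -> T -> C) (x : T) : C :=
  sum_n (fun k => Cmult (RtoC (pow (INR (depth x)) k)) (h k x)) (n - 1).

End Tree.

(* Main.v *)
Require Import Defs.
From Stdlib Require Import Reals.
From Coquelicot Require Import Coquelicot.
From mathcomp Require Import ssreflect ssrfun ssrbool eqtype ssrnat seq choice.
From Stdlib Require Import Lra FunctionalExtensionality ClassicalEpsilon.

Set Implicit Arguments.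
Unset Strict Implicit.
Ltac cring := match goal with |- ?a = ?b => change (@eq C a b); ring end.

Definition Dseq (P : nat -> C) : nat -> C := fun m => Cminus (P m) (P m.+1).
Fixpoint Dit (j : nat) (P : nat -> C) : nat -> C :=
  match j with O => P | S j' => Dseq (Dit j' P) end.
Definition Pk (k : nat) (m : nat) : C := RtoC (pow (INR m) k).
Fixpoint ck (k : nat) : C :=
  match k with O => RtoC 1 | S k' => Cmult (RtoC (- INR k)) (ck k') end.

Lemma ck_neq0 k : ck k <> RtoC 0.
Proof.
elim: k => [|k IH] /=.
  by move=> [] /R1_neq_R0.
apply: Cmult_neq_0 => //.
move=> [] H; have := pos_INR k; have := S_INR k; move: H; rewrite -/(INR k.+1); lra.
Qed.

Lemma DitS j P m : Dit j.+1 P m = Cminus (Dit j P m) (Dit j P m.+1).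
Proof. by []. Qed.

Lemma INRS_C m : RtoC (INR m.+1) = Cplus (RtoC (INR m)) (RtoC 1).
Proof. by rewrite S_INR RtoC_plus. Qed.

Lemma Dit_comm j (R : nat -> C) m :
  Dit j (fun m => Cmult (RtoC (INR m)) (R m)) m =
  Cplus (Cmult (RtoC (INR m)) (Dit j R m))
        (Cmult (RtoC (INR j)) (Cminus (Dit j R m) (Dit j.-1 R m))).
Proof.
elim: j m => [|j IH] m.
  rewrite /Dit. change (INR 0) with 0%R. ring.
rewrite DitS IH IH.
have E : forall m, Dit j R m.+1 = Cminus (Dit j R m) (Dit j.+1 R m).
  by move=> m'; rewrite DitS; ring.
rewrite !E INRS_C INRS_C.
case: j IH E => [|j] IH E.
  change (INR 0) with 0%R. cbn [Nat.pred]. rewrite /Dit /Dseq. cring.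
cbn [Nat.pred].
have E3 : Dit j R m.+1 = Cminus (Dit j R m) (Dit j.+1 R m) by rewrite DitS; cring.
rewrite E3. cring.
Qed.

Lemma Pk_S k : Pk k.+1 = (fun m => Cmult (RtoC (INR m)) (Pk k m)).
Proof. apply: functional_extensionality => m. by rewrite /Pk -RtoC_mult. Qed.

Lemma Pk_const k m : Dit k (Pk k) m = ck k.
Proof.
elim: k m => [|k IH] m.
  by rewrite /Dit /Pk.
rewrite Pk_S Dit_comm !DitS !IH.
rewrite [ck k.+1]/ck -/(ck k). idtac.
rewrite (_ : RtoC (- INR k.+1) = Copp (RtoC (INR k.+1))); last first.
  by rewrite /RtoC /Copp Ropp_0.
cring.
Qed.

Lemma Pk_van j k m : (k < j)%N -> Dit j (Pk k) m = RtoC 0.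
Proof.
elim: j m => [|j IH] m //.
rewrite ltnS leq_eqVlt => /orP [/eqP ->|H].
  rewrite DitS !Pk_const. cring.
rewrite DitS !IH //. cring.
Qed.

Lemma ex_series_R_norm (a : nat -> R) (b : nat -> R) :
  (forall n, Rabs (a n) <= b n) -> ex_series b -> ex_series a.
Proof. move=> H; apply: ex_series_le => n; exact: H. Qed.

Lemma depth_spec (T : countType) (o : T) (parent : T -> T) x :
  rooted_tree o parent -> is_depth o parent x (depth o parent x).
Proof.
move=> rt; rewrite /depth; apply: epsilon_spec.
have [k Hk] := rt x.
have ex : exists k, iter k parent x == o by exists k; apply/eqP.
case: (ex_minnP ex) => m /eqP Hm Hmin.
exists m; split => // j Hj Hjo.
have := Hmin j (introT eqP Hjo). by rewrite leqNgt Hj.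
Qed.

Lemma depth_unique (T : countType) (o : T) (parent : T -> T) x a b :
  is_depth o parent x a -> is_depth o parent x b -> a = b.
Proof.
move=> [Ha Ha'] [Hb Hb'].
case: (ltngtP a b) => // H.
- by case: (Hb' _ H).
- by case: (Ha' _ H).
Qed.

Lemma depth_child (T : countType) (o : T) (parent : T -> T) x y :
  rooted_tree o parent -> is_child o parent x y ->
  depth o parent y = (depth o parent x).+1.
Proof.
move=> rt /andP [yo /eqP py].
have [Hx Hx'] := depth_spec x rt.
apply: (depth_unique (depth_spec y rt)).
split; first by rewrite iterSr py.
case=> [|j] Hj.
  by move=> /= E; rewrite E eqxx in yo.
rewrite iterSr py; exact: Hx'.
Qed.

Lemma ex_lin2 (x y : nat -> R) c d :
  ex_series x -> ex_series y -> ex_series (fun n => c * x n + d * y n).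
Proof.
move=> Hx Hy.
apply: ex_series_ext (ex_series_plus _ _ (ex_series_scal_l c _ Hx) (ex_series_scal_l d _ Hy)).
by move=> n.
Qed.

Lemma Series_lin2 (x y : nat -> R) c d :
  ex_series x -> ex_series y -> Series (fun n => c * x n + d * y n) = c * Series x + d * Series y.
Proof.
move=> Hx Hy.
rewrite Series_plus.
- by rewrite !Series_scal_l.
- apply: ex_series_ext (ex_series_scal_l c _ Hx); by move=> n.
- apply: ex_series_ext (ex_series_scal_l d _ Hy); by move=> n.
Qed.

Lemma ex_fst (u : nat -> C) : ex_series (fun n => Cmod (u n)) -> ex_series (fun n => fst (u n)).
Proof.
apply: ex_series_R_norm => n.
have := Rmax_Cmod (u n). have := Rmax_l (Rabs (fst (u n))) (Rabs (snd (u n))). lra.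
Qed.

Lemma ex_snd (u : nat -> C) : ex_series (fun n => Cmod (u n)) -> ex_series (fun n => snd (u n)).
Proof.
apply: ex_series_R_norm => n.
have := Rmax_Cmod (u n). have := Rmax_r (Rabs (fst (u n))) (Rabs (snd (u n))). lra.
Qed.

Lemma ser_lin (u v w : nat -> C) (a b : C) :
  (forall n, w n = Cplus (Cmult a (u n)) (Cmult b (v n))) ->
  ex_series (fun n => Cmod (u n)) -> ex_series (fun n => Cmod (v n)) ->
  ex_series (fun n => Cmod (w n)) /\
  (Series (fun n => fst (w n)), Series (fun n => snd (w n))) =
  Cplus (Cmult a (Series (fun n => fst (u n)), Series (fun n => snd (u n))))
        (Cmult b (Series (fun n => fst (v n)), Series (fun n => snd (v n)))).
Proof.
move=> Hw Hu Hv; split.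
  apply: (@ex_series_R_norm _ (fun n => Cmod a * Cmod (u n) + Cmod b * Cmod (v n))).
    move=> n; rewrite Hw Rabs_pos_eq; last exact: Cmod_ge_0.
    apply: Rle_trans (Cmod_triangle _ _) _; rewrite !Cmod_mult; lra.
  exact: (@ex_lin2 (fun n => Cmod (u n)) (fun n => Cmod (v n)) _ _ Hu Hv).
have Hu1 := ex_fst Hu; have Hu2 := ex_snd Hu.
have Hv1 := ex_fst Hv; have Hv2 := ex_snd Hv.
have E1 : forall n, fst (w n) = 1 * (fst a * fst (u n) + (- snd a) * snd (u n)) +
                                1 * (fst b * fst (v n) + (- snd b) * snd (v n)).
  move=> n; rewrite Hw /Cplus /Cmult /=; ring.
have E2 : forall n, snd (w n) = 1 * (fst a * snd (u n) + snd a * fst (u n)) +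
                                1 * (fst b * snd (v n) + snd b * fst (v n)).
  move=> n; rewrite Hw /Cplus /Cmult /=; ring.
rewrite (Series_ext _ _ E1) (Series_ext _ _ E2).
rewrite !Series_lin2 //; try exact: ex_lin2.
rewrite /Cplus /Cmult /=. f_equal; ring.
Qed.

Lemma Qterm_lin (T : countType) (o : T) parent q a b g1 g2 x n :
  Qterm o parent q (fun y => Cplus (Cmult a (g1 y)) (Cmult b (g2 y))) x n =
  Cplus (Cmult a (Qterm o parent q g1 x n)) (Cmult b (Qterm o parent q g2 x n)).
Proof. rewrite /Qterm; case: pickle_inv => [y|]; [case: is_child|]; cring. Qed.

Lemma Qterm_depth (T : countType) (o : T) parent q (P : nat -> C) g x n :
  rooted_tree o parent ->
  Qterm o parent q (fun y => Cmult (P (depth o parent y)) (g y)) x n =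
  Cplus (Cmult (P (depth o parent x).+1) (Qterm o parent q g x n))
        (Cmult (RtoC 0) (Qterm o parent q g x n)).
Proof.
move=> rt; rewrite /Qterm; case: pickle_inv => [y|]; last by cring.
case E: is_child; last by cring.
rewrite (depth_child rt E); cring.
Qed.

Lemma Qlin (T : countType) (o : T) parent q a b g1 g2 :
  Qdef o parent q g1 -> Qdef o parent q g2 ->
  Qdef o parent q (fun y => Cplus (Cmult a (g1 y)) (Cmult b (g2 y))) /\
  forall x, Qop o parent q (fun y => Cplus (Cmult a (g1 y)) (Cmult b (g2 y))) x =
    Cplus (Cmult a (Qop o parent q g1 x)) (Cmult b (Qop o parent q g2 x)).
Proof.
move=> H1 H2; split.
  move=> x; case: (ser_lin (Qterm_lin o parent q a b g1 g2 x) (H1 x) (H2 x)) => //.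
move=> x; case: (ser_lin (Qterm_lin o parent q a b g1 g2 x) (H1 x) (H2 x)) => _ E.
exact: E.
Qed.

Lemma Qdepth (T : countType) (o : T) parent q (P : nat -> C) g :
  rooted_tree o parent -> Qdef o parent q g ->
  Qdef o parent q (fun y => Cmult (P (depth o parent y)) (g y)) /\
  forall x, Qop o parent q (fun y => Cmult (P (depth o parent y)) (g y)) x =
    Cmult (P (depth o parent x).+1) (Qop o parent q g x).
Proof.
move=> rt H1; split.
  move=> x; case: (ser_lin (fun n => Qterm_depth q P g x n rt) (H1 x) (H1 x)) => //.
move=> x; case: (ser_lin (fun n => Qterm_depth q P g x n rt) (H1 x) (H1 x)) => _ E.
rewrite /Qop E -/(Qop o parent q g x). cring.
Qed.

Definition Lop (T : countType) (o : T) parent q (lam : C) (g : T -> C) : T -> C :=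
  fun x => Cminus (Cmult lam (g x)) (Qop o parent q g x).

Lemma LiterS (T : countType) (o : T) parent q lam k f :
  Liter o parent q lam k.+1 f = Lop o parent q lam (Liter o parent q lam k f).
Proof. by []. Qed.

Lemma Lop_lin (T : countType) (o : T) parent q lam a b g1 g2 :
  Qdef o parent q g1 -> Qdef o parent q g2 ->
  Lop o parent q lam (fun y => Cplus (Cmult a (g1 y)) (Cmult b (g2 y))) =
  (fun x => Cplus (Cmult a (Lop o parent q lam g1 x)) (Cmult b (Lop o parent q lam g2 x))).
Proof.
move=> H1 H2; apply: functional_extensionality => x.
rewrite /Lop (proj2 (Qlin a b H1 H2)). cring.
Qed.

Lemma harm_lin (T : countType) (o : T) parent q lam a b h1 h2 :
  harmonic o parent q lam h1 -> harmonic o parent q lam h2 ->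
  harmonic o parent q lam (fun y => Cplus (Cmult a (h1 y)) (Cmult b (h2 y))).
Proof.
move=> [H1 E1] [H2 E2]; have [D E] := Qlin a b H1 H2.
split => // x; rewrite E E1 E2; cring.
Qed.

Lemma Lop_harm_depth (T : countType) (o : T) parent q lam (P : nat -> C) h :
  rooted_tree o parent -> harmonic o parent q lam h ->
  Qdef o parent q (fun y => Cmult (P (depth o parent y)) (h y)) /\
  Lop o parent q lam (fun y => Cmult (P (depth o parent y)) (h y)) =
  (fun x => Cmult (Cmult lam (Dseq P (depth o parent x))) (h x)).
Proof.
move=> rt [H E]; have [D E'] := Qdepth P rt H.
split => //; apply: functional_extensionality => x.
rewrite /Lop E' E /Dseq; cring.
Qed.

Definition Fsum (T : countType) (o : T) parent (P : nat -> nat -> C) (h : nat -> T -> C) (N : nat) : T -> C :=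
  fun x => sum_n (fun k => Cmult (P k (depth o parent x)) (h k x)) N.

Lemma Fsum_S (T : countType) (o : T) parent P h N :
  Fsum o parent P h N.+1 =
  (fun x => Cplus (Cmult (RtoC 1) (Fsum o parent P h N x))
     (Cmult (RtoC 1) (Cmult (P N.+1 (depth o parent x)) (h N.+1 x)))).
Proof.
apply: functional_extensionality => x; rewrite /Fsum sum_Sn.
change (@plus C_AbelianMonoid) with Cplus. cring.
Qed.

Lemma Fsum_L (T : countType) (o : T) parent q lam P h N :
  rooted_tree o parent ->
  (forall k, (k <= N)%N -> harmonic o parent q lam (h k)) ->
  Qdef o parent q (Fsum o parent P h N) /\
  Lop o parent q lam (Fsum o parent P h N) =
  Fsum o parent (fun k m => Cmult lam (Dseq (P k) m)) h N.
Proof.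
move=> rt; elim: N => [|N IH] Hh.
  have E : Fsum o parent P h 0 = (fun y => Cmult (P 0%N (depth o parent y)) (h 0%N y)).
    by apply: functional_extensionality => x; rewrite /Fsum sum_O.
  have [D E'] := Lop_harm_depth (P 0%N) rt (Hh 0%N (leqnn 0)).
  rewrite E; split => //; rewrite E'.
  by apply: functional_extensionality => x; rewrite /Fsum sum_O.
have [D1 E1] := IH (fun k Hk => Hh k (leqW Hk)).
have [D2 E2] := Lop_harm_depth (P N.+1) rt (Hh N.+1 (leqnn _)).
rewrite Fsum_S; split; first exact: (proj1 (Qlin _ _ D1 D2)).
rewrite Lop_lin // E1 E2 Fsum_S //.
Qed.

Fixpoint cpow (z : C) (n : nat) : C :=
  match n with O => RtoC 1 | S n' => Cmult z (cpow z n') end.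

Lemma cpow_neq0 z n : z <> RtoC 0 -> cpow z n <> RtoC 0.
Proof.
move=> Hz; elim: n => [|n IH] /=; last exact: Cmult_neq_0.
by move=> [] /R1_neq_R0.
Qed.

Lemma Fsum_Liter (T : countType) (o : T) parent q lam P h N :
  rooted_tree o parent ->
  (forall k, (k <= N)%N -> harmonic o parent q lam (h k)) ->
  forall j,
  Qdef o parent q (Liter o parent q lam j (Fsum o parent P h N)) /\
  Liter o parent q lam j (Fsum o parent P h N) =
  Fsum o parent (fun k m => Cmult (cpow lam j) (Dit j (P k) m)) h N.
Proof.
move=> rt Hh; elim => [|j [IHd IHe]].
  have E : Fsum o parent P h N = Fsum o parent (fun k m => Cmult (cpow lam 0) (Dit 0 (P k) m)) h N.
    apply: functional_extensionality => x; rewrite /Fsum; apply: sum_n_ext => k.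
    rewrite /cpow /Dit; cring.
  split; last exact: E.
  exact: (proj1 (Fsum_L P rt Hh)).
have E : Liter o parent q lam j.+1 (Fsum o parent P h N) =
         Fsum o parent (fun k m => Cmult (cpow lam j.+1) (Dit j.+1 (P k) m)) h N.
  rewrite LiterS IHe (proj2 (Fsum_L _ rt Hh)).
  apply: functional_extensionality => x; rewrite /Fsum; apply: sum_n_ext => k.
  rewrite /Dseq DitS /cpow -/cpow; cring.
split; last exact: E.
rewrite E; exact: (proj1 (Fsum_L _ rt Hh)).
Qed.

Lemma sum_n_zero (f : nat -> C) N :
  (forall k, (k <= N)%N -> f k = RtoC 0) -> sum_n f N = RtoC 0.
Proof.
elim: N => [|N IH] H.
  by rewrite sum_O H.
rewrite sum_Sn IH; last by move=> k Hk; apply: H; exact: leqW.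
rewrite H //. change (@plus C_AbelianMonoid) with Cplus. cring.
Qed.

Lemma sum_last (f : nat -> C) N :
  (forall k, (k < N)%N -> f k = RtoC 0) -> sum_n f N = f N.
Proof.
case: N => [|N] H; first by rewrite sum_O.
rewrite sum_Sn sum_n_zero //. change (@plus C_AbelianMonoid) with Cplus. cring.
Qed.

Lemma Liter_zero (T : countType) (o : T) parent q lam j :
  Liter o parent q lam j (fun _ => RtoC 0) = (fun _ => RtoC 0).
Proof.
elim: j => [|j IH] //.
rewrite LiterS IH; apply: functional_extensionality => x.
have Hz : forall n, Qterm o parent q (fun _ => RtoC 0) x n = RtoC 0.
  by move=> n; rewrite /Qterm; case: pickle_inv => [y|]; [case: is_child|]; cring.
rewrite /Lop /Qop !(Series_ext _ (fun n : nat => 0 * 0)%R); try (move=> n; rewrite Hz /=; ring).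
rewrite Series_scal_l Rmult_0_l. change (0%R, 0%R) with (RtoC 0). cring.
Qed.

Lemma Liter_lin (T : countType) (o : T) parent q lam a b f1 f2 k :
  (forall j, (j < k)%N -> Qdef o parent q (Liter o parent q lam j f1)) ->
  (forall j, (j < k)%N -> Qdef o parent q (Liter o parent q lam j f2)) ->
  Liter o parent q lam k (fun y => Cplus (Cmult a (f1 y)) (Cmult b (f2 y))) =
  (fun x => Cplus (Cmult a (Liter o parent q lam k f1 x)) (Cmult b (Liter o parent q lam k f2 x))).
Proof.
elim: k => [|k IH] H1 H2 //.
rewrite LiterS IH; last (by move=> j Hj; apply: H2; exact: ltnW); last (by move=> j Hj; apply: H1; exact: ltnW).
rewrite Lop_lin //; [exact: H1 | exact: H2].
Qed.

Lemma uniq_zero (T : countType) (o : T) parent q lam :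
  rooted_tree o parent -> lam <> RtoC 0 ->
  forall N (e : nat -> T -> C),
  (forall k, (k <= N)%N -> harmonic o parent q lam (e k)) ->
  (forall x, Fsum o parent Pk e N x = RtoC 0) ->
  forall k, (k <= N)%N -> forall x, e k x = RtoC 0.
Proof.
move=> rt Hl; elim => [|N IH] e He HF.
  move=> k; rewrite leqn0 => /eqP -> x.
  have := HF x; rewrite /Fsum sum_O /Pk /=. move=> E; rewrite -E; cring.
have eN : forall x, e N.+1 x = RtoC 0.
  move=> x.
  have [_ EL] := Fsum_Liter Pk rt He N.+1.
  have EF : Fsum o parent Pk e N.+1 = (fun _ => RtoC 0).
    by apply: functional_extensionality.
  rewrite EF Liter_zero in EL.
  have := f_equal (fun g => g x) EL; rewrite /Fsum sum_last.
    rewrite Pk_const => E.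
    case: (Ceq_dec (e N.+1 x) (RtoC 0)) => // Hne.
    have := Cmult_neq_0 _ _ (Cmult_neq_0 _ _ (@cpow_neq0 lam N.+1 Hl) (@ck_neq0 N.+1)) Hne.
    by rewrite -E.
  move=> k Hk; rewrite Pk_van //; cring.
move=> k; rewrite leq_eqVlt => /orP [/eqP ->|Hk] //.
apply: (IH e) => //.
  by move=> j Hj; apply: He; exact: leqW.
move=> x; have := HF x; rewrite Fsum_S eN => <-. cring.
Qed.

Lemma Cminus0 (a b : C) : Cminus a b = RtoC 0 -> b = a.
Proof.
move=> H; have -> : b = Cminus a (Cminus a b) by cring.
rewrite H; cring.
Qed.

Lemma exist_exp (T : countType) (o : T) parent q lam :
  rooted_tree o parent -> lam <> RtoC 0 ->
  forall N f, polyharmonic o parent q lam N.+1 f ->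
  exists h : nat -> T -> C,
    (forall k, (k <= N)%N -> harmonic o parent q lam (h k)) /\
    (forall x, f x = Fsum o parent Pk h N x).
Proof.
move=> rt Hl; elim => [|N IH] f [Hd Hz].
  exists (fun _ => f); split.
    move=> k _; split; first exact: (Hd 0%N (ltnSn 0)).
    move=> x; apply: Cminus0; exact: (Hz x).
  move=> x; rewrite /Fsum sum_O /Pk /=; cring.
pose g := Liter o parent q lam N.+1 f.
have Hg : harmonic o parent q lam g.
  split; first exact: (Hd N.+1 (ltnSn _)).
  move=> x; apply: Cminus0; exact: (Hz x).
pose c := Cmult (cpow lam N.+1) (ck N.+1).
have Hc : c <> RtoC 0 by apply: Cmult_neq_0; [exact: cpow_neq0 | exact: ck_neq0].
pose g' := fun y => Cplus (Cmult (Cinv c) (g y)) (Cmult (RtoC 0) (g y)).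
have Hg' : harmonic o parent q lam g' by exact: harm_lin.
pose u := Fsum o parent (fun _ m => Pk N.+1 m) (fun _ => g') 0.
have Hh0 : forall k, (k <= 0)%N -> harmonic o parent q lam ((fun _ => g') k) by [].
have HU := Fsum_Liter (fun _ m => Pk N.+1 m) rt Hh0.
pose f' := fun y => Cplus (Cmult (RtoC 1) (f y)) (Cmult (RtoC (-1)) (u y)).
have Hf' : polyharmonic o parent q lam N.+1 f'.
  have HL : forall k, (k <= N.+1)%N ->
    Liter o parent q lam k f' =
    (fun x => Cplus (Cmult (RtoC 1) (Liter o parent q lam k f x))
                    (Cmult (RtoC (-1)) (Liter o parent q lam k u x))).
    move=> k Hk; apply: Liter_lin => j Hj.
      apply: Hd; exact: (leq_trans Hj (leqW Hk)).
    exact: (proj1 (HU j)).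
  split.
    move=> k Hk; rewrite HL; last exact: ltnW.
    apply: (proj1 (Qlin _ _ _ _)); [apply: Hd; exact: (leq_trans Hk (leqnSn _)) | exact: (proj1 (HU k))].
  move=> x; rewrite HL // (proj2 (HU N.+1)) /Fsum sum_O Pk_const.
  rewrite /g' -/g -/c. change (@eq C (Cplus (Cmult (RtoC 1) (g x))
     (Cmult (RtoC (-1)) (Cmult (Cmult (cpow lam N.+1) (ck N.+1))
       (Cplus (Cmult (Cinv c) (g x)) (Cmult (RtoC 0) (g x)))))) (RtoC 0)).
  rewrite -/c. field. exact: Hc.
have [h' [Hh' Ef']] := IH f' Hf'.
exists (fun k => if (k <= N)%N then h' k else g'); split.
  move=> k Hk; case: ifP => [H|_]; [exact: Hh' | exact: Hg'].
move=> x; rewrite Fsum_S.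
rewrite ltnn.
have -> : Fsum o parent Pk (fun k => if (k <= N)%N then h' k else g') N x = Fsum o parent Pk h' N x.
  rewrite /Fsum; apply: sum_n_ext_loc => k Hk.
  have -> : (k <= N)%N by apply/leP.
  by [].
rewrite -Ef' /f' /u /Fsum sum_O. cring.
Qed.

Theorem corollary6p3 (T : countType) (o : T) (parent : T -> T) (q : T -> T -> R)
  (lam : C) (n : nat) (f : T -> C) :
  rooted_tree o parent ->
  stochastic_forward o parent q ->
  lam <> RtoC 0 ->
  (1 <= n)%N ->
  polyharmonic o parent q lam n f ->
  exists h : nat -> T -> C,
    (forall k, (k < n)%N -> harmonic o parent q lam (h k)) /\
    (forall x, f x = poly_expansion o parent n h x) /\
    (forall h' : nat -> T -> C,
       (forall k, (k < n)%N -> harmonic o parent q lam (h' k)) ->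
       (forall x, f x = poly_expansion o parent n h' x) ->
       forall k, (k < n)%N -> forall x, h' k x = h k x).
Proof.
move=> rt _ Hl; case: n => [|N] // _ Hp.
have EP : forall h x, poly_expansion o parent N.+1 h x = Fsum o parent Pk h N x.
  by move=> h x; rewrite /poly_expansion /Fsum subn1.
have [h [Hh Ef]] := exist_exp rt Hl Hp.
exists h; split; first by [].
split; first by move=> x; rewrite EP.
move=> h' Hh' Ef' k Hk x.
pose e := fun k y => Cplus (Cmult (RtoC 1) (h' k y)) (Cmult (RtoC (-1)) (h k y)).
have He : forall k, (k <= N)%N -> harmonic o parent q lam (e k).
  by move=> j Hj; apply: harm_lin; [exact: Hh' | exact: Hh].
have HF : forall y, Fsum o parent Pk e N y = RtoC 0.
  move=> y.
  have E1 : Fsum o parent Pk e N y =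
     Cplus (Cmult (RtoC 1) (Fsum o parent Pk h' N y)) (Cmult (RtoC (-1)) (Fsum o parent Pk h N y)).
    rewrite /Fsum /e; elim: N {Hh Hh' He Hk Ef Ef' EP Hp} => [|M IHM].
      rewrite !sum_O; cring.
    rewrite !sum_Sn IHM. change (@plus C_AbelianMonoid) with Cplus. cring.
  rewrite E1 -Ef -EP -Ef'; cring.
have := uniq_zero rt Hl He HF Hk x.
rewrite /e => E; rewrite -[h' k x](_ : Cplus (Cminus (h' k x) (h k x)) (h k x) = h' k x); last by cring.
have -> : Cminus (h' k x) (h k x) = RtoC 0 by rewrite -E; cring.
cring.
Qed.
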